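(* Consider the controlled system $\dot x = f(x)+g(x)u$, $y=h(x)$, with $x\in\mathbb{R}^{d_x}$, $u\in\mathbb{R}^{d_u}$, where $f,g,h$ are sufficiently many times differentiable, let $\mathcal{S}\subset\mathbb{R}^{d_x}$ be open and let $i\ge1$ be an integer. Let $x\in\mathcal{S}$ and suppose there exist $L>0$ and a neighborhood $N$ of $x$ such that $$|L_gL_f^{i-1}h(x_a)-L_gL_f^{i-1}h(x_b)|\le L\,|\mathbf{H}_i(x_a)-\mathbf{H}_i(x_b)|\qquad\forall (x_a,x_b)\in N^2.$$ Then for any nonzero $v\in\mathbb{R}^{d_x}$ and any $k\in\{1,\dots,d_u\}$, $$\frac{\partial\mathbf{H}_i}{\partial x}(x)\,v=0\ \Longrightarrow\ \frac{\partial L_{g_k}L_f^{i-1}h}{\partial x}(x)\,v=0.$$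
   Context: $L_f$ is the Lie derivative along $f$, $g_k$ is the $k$-th column of $g$, and $L_g\alpha=(L_{g_1}\alpha,\dots,L_{g_{d_u}}\alpha)$. $\mathbf{H}_i(x)=(h(x),L_fh(x),\dots,L_f^{i-1}h(x))$. *)

(* Defs.v *)
From HB Require Import structures.
From mathcomp Require Import all_boot all_order all_algebra.
From mathcomp Require Import all_classical all_reals all_analysis.
Set Implicit Arguments. Unset Strict Implicit. Unset Printing Implicit Defensive.
Import Order.TTheory GRing.Theory Num.Theory.
Import numFieldNormedType.Exports.
Local Open Scope ring_scope.
Local Open Scope classical_set_scope.

Section Lie.
Variables (R : realType) (dx dy du : nat).
Notation X := 'rV[R]_dx.

Definition lie (F : X -> X) (phi : X -> 'rV[R]_dy) : X -> 'rV[R]_dy :=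
  fun x => ('d phi x : X -> 'rV[R]_dy) (F x).

Definition lie_iter (f : X -> X) (h : X -> 'rV[R]_dy) (j : nat) :=
  iter j (lie f) h.

Definition gcol (g : X -> 'M[R]_(dx, du)) (k : 'I_du) : X -> X :=
  fun x => (col k (g x))^T.

Definition lie_g (g : X -> 'M[R]_(dx, du)) (phi : X -> 'rV[R]_dy)
  : X -> 'M[R]_(du, dy) :=
  fun x => \matrix_(k < du, l < dy) lie (gcol g k) phi x ord0 l.

Definition Hvec (f : X -> X) (h : X -> 'rV[R]_dy) (i : nat)
  : X -> 'M[R]_(i, dy) :=
  fun x => \matrix_(j < i, l < dy) lie_iter f h j x ord0 l.
End Lie.

(* Main.v *)
Require Import Defs.
From HB Require Import structures.
From mathcomp Require Import all_boot all_order all_algebra.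
From mathcomp Require Import all_classical all_reals all_analysis.
Import Order.TTheory GRing.Theory Num.Theory.
Import numFieldNormedType.Exports.
Local Open Scope ring_scope.
Local Open Scope classical_set_scope.

Lemma Hvec_diff (R : realType) (dx dy : nat) (f : 'rV[R]_dx -> 'rV[R]_dx)
  (h : 'rV[R]_dx -> 'rV[R]_dy) (i : nat)
  (dLfh : forall j : nat, (j < i)%N -> forall z, differentiable (lie_iter f h j) z)
  (x : 'rV[R]_dx) : differentiable (Hvec f h i) x.
Proof.
have -> : Hvec f h i = \sum_(a < i) \sum_(l < dy)
    (fun z => lie_iter f h a z ord0 l *: (delta_mx a l : 'M[R]_(i, dy))).
  apply/funext => z; rewrite [LHS]matrix_sum_delta fct_sumE.
  apply: eq_bigr => a _; rewrite fct_sumE; apply: eq_bigr => l _.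
  by rewrite /Hvec mxE.
apply: differentiable_sum => a; apply: differentiable_sum => l.
apply: differentiableZl.
have -> : (fun z => lie_iter f h a z ord0 l) =
  (fun M : 'rV[R]_dy => M ord0 l) \o lie_iter f h a by [].
apply: differentiable_comp; first exact: dLfh.
exact: differentiable_coord.
Qed.

Theorem lemma4 (R : realType) (dx du dy : nat)
  (f : 'rV[R]_dx -> 'rV[R]_dx) (g : 'rV[R]_dx -> 'M[R]_(dx, du))
  (h : 'rV[R]_dx -> 'rV[R]_dy) (S : set 'rV[R]_dx) (i : nat)
  (S_open : open S) (i_ge1 : (1 <= i)%N)
  (* "sufficiently differentiable": the Lie derivatives involved are differentiable *)
  (dLfh : forall j : nat, (j < i)%N -> forall z, differentiable (lie_iter f h j) z)
  (dLgLfh : forall k : 'I_du, forall z,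
      differentiable (lie (gcol g k) (lie_iter f h i.-1)) z)
  (x : 'rV[R]_dx) (xS : S x)
  (Hlip : exists (L : R) (N : set 'rV[R]_dx), 0 < L /\ N \in nbhs x /\
     forall xa xb, N xa -> N xb ->
       `| lie_g g (lie_iter f h i.-1) xa - lie_g g (lie_iter f h i.-1) xb |
         <= L * `| Hvec f h i xa - Hvec f h i xb |) :
  forall (v : 'rV[R]_dx) (k : 'I_du), v != 0 ->
    ('d (Hvec f h i) x : 'rV[R]_dx -> 'M[R]_(i, dy)) v = 0 ->
    ('d (lie (gcol g k) (lie_iter f h i.-1)) x : 'rV[R]_dx -> 'rV[R]_dy) v = 0.
Proof.
move=> v k _ dH0.
case: Hlip => L [N [L0 [/[!in_setE] hN Hl]]].
set phi := lie (gcol g k) (lie_iter f h i.-1).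
set G := lie_g g (lie_iter f h i.-1).
set H := Hvec f h i.
have dH : differentiable H x by exact: Hvec_diff.
have dphi : differentiable phi x by exact: dLgLfh.
have cH := diff_derivable (v := v) dH.
have cphi := diff_derivable (v := v) dphi.
rewrite -(deriveE v dphi).
rewrite -(deriveE v dH) in dH0.
have rowb : forall y, `|phi y - phi x| <= `|G y - G x|.
  move=> y; rewrite [leLHS]/Num.Def.normr/= mx_normrE.
  apply: bigmax_le => //= -[a l] _ /=.
  rewrite [leRHS]/Num.Def.normr/= mx_normrE.
  apply: le_trans; last exact: (le_bigmax _ _ (k, l)).
  by rewrite /= !mxE (ord1 a) /G /lie_g.
have c : (fun t : R => t *: v + x) @ 0^' --> x.
  have : {for 0, continuous (fun t : R => t *: v + x)}.
    have := cvgD (@scalel_continuous _ _ v 0) (cvg_cst x (F := nbhs (0:R))).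
    by rewrite /prop_for /continuous_at; apply.
  by move/continuous_withinNx; rewrite scale0r add0r.
have nN : \forall t \near 0^', N (t *: v + x) by exact: c.
have lB := cvg_norm cphi; have {}lB := lB ltac:(exact: _).
have lA := cvg_norm cH; have {}lA := lA ltac:(exact: _); have {}lA := cvgMl_tmp (a := L) lA; have {}lA := lA ltac:(exact: _).
suff : `|'D_v phi x| <= 0 by rewrite normr_le0 => /eqP.
have <- : L * `|'D_v H x| = 0 by rewrite dH0 normr0 mulr0.
rewrite -(cvg_lim _ lB) // -(cvg_lim _ lA) //.
apply: ler_lim; [by apply/cvg_ex; eexists; exact: lB|
  by apply/cvg_ex; eexists; exact: lA|].
near=> t.
rewrite /= !normrZ mulrCA ler_wpM2l //.
apply: le_trans (rowb _) _.
apply: Hl; first by near: t.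
by apply: (nbhs_singleton hN).
Unshelve. all: by end_near.
Qed.
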